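(* Let $\mathcal F$ be a family of nonempty subsets of $[r]$ with $[r]\in\mathcal F$. Then $\Delta_{\mathcal F}$ has dimension $r-1$, and its facets are in bijection with $\widehat{\mathcal F}\setminus\{[r]\}$: for each $G\in\widehat{\mathcal F}$ with $G\ne[r]$, the set of points of $\Delta_{\mathcal F}$ where $\sum_{i\in G}x_i=|\{F\in\mathcal F:F\subseteq G\}|$ is a facet, distinct $G$ give distinct facets, and every facet arises this way. In particular the inequality description of Proposition 3.12 restricted to $G\in\widehat{\mathcal F}$ is irredundant.
   Context: For $F\subseteq[r]$ nonempty, $\Delta_F=\operatorname{conv}\{e_i:i\in F\}\subseteq\mathbb R^r$, and $\Delta_{\mathcal F}=\sum_{F\in\mathcal F}\Delta_F$ (Minkowski sum). Proposition 3.12 states that $\Delta_{\mathcal F}=\{x\in\mathbb R^r_{\ge0}:\sum_i x_i=|\mathcal F|,\ \sum_{i\in G}x_i\ge|\{F\in\mathcal F:F\subseteq G\}|\ \forall G\in\widehat{\mathcal F}\}$. The building closure $\widehat{\mathcal F}$ is the smallest family of subsets of $[r]$ containing $\mathcal F$ and all singletons such that $F\cup F'\in\widehat{\mathcal F}$ whenever $F,F'\in\widehat{\mathcal F}$ and $F\cap F'\ne\emptyset$. *)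

(* Defs.v *)
From HB Require Import structures.
From mathcomp Require Import all_boot all_order all_algebra.
Set Implicit Arguments. Unset Strict Implicit. Unset Printing Implicit Defensive.
Import Order.TTheory GRing.Theory Num.Theory.
Local Open Scope ring_scope.

Section Defs.
Variables (R : realFieldType) (r : nat).
Notation pt := 'rV[R]_r.

Definition ptset := pt -> Prop.

Definition seteqP (S T : ptset) : Prop := forall x, S x <-> T x.

Definition evec (i : 'I_r) : pt := delta_mx 0 i.

Definition simplexF (F : {set 'I_r}) : ptset := fun x =>
  exists lam : 'I_r -> R, (forall i, 0 <= lam i) /\
    \sum_(i in F) lam i = 1 /\ x = \sum_(i in F) lam i *: evec i.

Definition DeltaFam (Fam : {set {set 'I_r}}) : ptset := fun x =>
  exists y : {set 'I_r} -> pt, (forall F, F \in Fam -> simplexF F (y F)) /\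
    x = \sum_(F in Fam) y F.

Definition building_closed (H : {set {set 'I_r}}) : Prop :=
  forall G G', G \in H -> G' \in H -> G :&: G' != set0 -> G :|: G' \in H.

Definition bclosure (Fam : {set {set 'I_r}}) : {set {set 'I_r}} :=
  [set G | [forall H : {set {set 'I_r}},
     [&& Fam \subset H, [forall i : 'I_r, [set i] \in H] &
        [forall G1 in H, forall G2 in H,
           (G1 :&: G2 != set0) ==> (G1 :|: G2 \in H)]] ==> (G \in H)]].

(* affine dimension: P has dimension d iff P contains d+1 affinely independent
   points and no d+2 affinely independent points (empty P has no nat dimension) *)
Definition aff_indep_in (P : ptset) (p0 : pt) (ps : seq pt) : Prop :=
  P p0 /\ (forall q, q \in ps -> P q) /\ free [seq q - p0 | q <- ps].

Definition has_dim (P : ptset) (d : nat) : Prop :=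
  (exists p0 ps, aff_indep_in P p0 ps /\ size ps = d) /\
  (forall p0 ps, aff_indep_in P p0 ps -> (size ps <= d)%N).

Definition dotp (a x : pt) : R := \sum_(i < r) a 0 i * x 0 i.

Definition face (P S : ptset) : Prop :=
  exists (a : pt) (b : R), (forall x, P x -> dotp a x <= b) /\
    seteqP S (fun x => P x /\ dotp a x = b).

Definition facet (P S : ptset) : Prop :=
  face P S /\ exists d : nat, has_dim P d.+1 /\ has_dim S d.

Definition nFsub (Fam : {set {set 'I_r}}) (G : {set 'I_r}) : R :=
  #|[set F in Fam | F \subset G]|%:R.

Definition Gface (Fam : {set {set 'I_r}}) (G : {set 'I_r}) : ptset := fun x =>
  DeltaFam Fam x /\ \sum_(i in G) x 0 i = nFsub Fam G.

(* The nonnegativity constraints x_i >= 0 are not listed separately: they are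
   the singleton inequalities G = {i} (singletons lie in the building closure,
   and #{F in Fam | F \subset {i}} >= 0). *)
Definition Hsys (Fam : {set {set 'I_r}}) (T : {set {set 'I_r}}) : ptset :=
  fun x => \sum_(i < r) x 0 i = #|Fam|%:R /\
    forall G, G \in T -> nFsub Fam G <= \sum_(i in G) x 0 i.

End Defs.

(* Main.v *)
Require Import Defs.
From mathcomp Require Import all_boot all_order all_algebra.
From mathcomp Require Import zify.
Import Order.TTheory GRing.Theory Num.Theory.
Local Open Scope ring_scope.
Set Implicit Arguments. Unset Strict Implicit. Unset Printing Implicit Defensive.

Lemma evecE (R : realFieldType) r (i j : 'I_r) : evec R i 0 j = (i == j)%:R.
Proof. rewrite /evec mxE /=. by rewrite eq_sym. Qed.

Lemma combE (R : realFieldType) r (F : {set 'I_r}) (lam : 'I_r -> R) j :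
  (\sum_(i in F) lam i *: evec R i) 0 j = (j \in F)%:R * lam j.
Proof.
rewrite summxE.
case: (boolP (j \in F)) => jF.
  rewrite (bigD1 j) //= big1 ?addr0; first by rewrite mxE evecE eqxx mulr1 mul1r.
  by move=> i /andP[_ ij]; rewrite mxE evecE (negbTE ij) mulr0.
rewrite big1 ?mul0r // => i iF; rewrite mxE evecE.
by case: eqP => [e|]; [rewrite -e iF in jF|rewrite mulr0].
Qed.

Lemma simplexP (R : realFieldType) r (F : {set 'I_r}) (y : 'rV[R]_r) :
  simplexF F y <-> [/\ forall j, 0 <= y 0 j, forall j, j \notin F -> y 0 j = 0
                  & \sum_(j in F) y 0 j = 1].
Proof.
split.
  move=> [lam [l0 [l1 ->]]]; split.
  - by move=> j; rewrite combE mulr_ge0 ?ler0n.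
  - by move=> j jF; rewrite combE (negbTE jF) mul0r.
  by rewrite -l1; apply: eq_bigr => j jF; rewrite combE jF mul1r.
move=> [y0 yF y1]; exists (fun i => y 0 i); split=> //; split=> //.
apply/rowP => j; rewrite combE.
case: (boolP (j \in F)) => jF; first by rewrite mul1r.
by rewrite mul0r yF.
Qed.

Lemma evecB (R : realFieldType) r (i k j : 'I_r) :
  (evec R i - evec R k) 0 j = (i == j)%:R - (k == j)%:R.
Proof. by rewrite !mxE /= ![_ == j]eq_sym. Qed.

Definition nfix r (beta : 'I_r -> 'I_r) : {set 'I_r} := [set i | beta i != i].

Definition bvecs (R : realFieldType) r (beta : 'I_r -> 'I_r) : seq 'rV[R]_r :=
  [seq evec R i - evec R (beta i) | i <- enum (nfix beta)].

Lemma free_unit (R : realFieldType) r (w : 'I_r -> 'rV[R]_r) (s : seq 'I_r) :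
  uniq s -> (forall i j, j \in s -> w i 0 j = (i == j)%:R) ->
  free [seq w i | i <- s].
Proof.
elim: s => [|i s IH] /=; first by rewrite nil_free.
move=> /andP[nis us] Hw.
have IH' := IH us (fun k j js => Hw k j (@mem_behead _ (i :: s) j js)).
rewrite free_cons IH' andbT.
apply/negP => /(@coord_span _ _ _ (in_tuple _)) Hsp.
have := congr1 (fun v : 'rV[R]_r => v 0 i) Hsp.
rewrite Hw ?inE ?eqxx // summxE big1; first by move/eqP; rewrite oner_eq0.
move=> k _; rewrite mxE /= (nth_map i); last by rewrite -(size_map w).
rewrite Hw ?mem_head //.
case: eqP => [e|]; last by rewrite mulr0.
have: nth i s k \in s by rewrite mem_nth // -(size_map w).
by rewrite e (negbTE nis).
Qed.

Lemma free_bvecs (R : realFieldType) r (beta : 'I_r -> 'I_r) :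
  (forall i, beta (beta i) = beta i) -> free (bvecs R beta).
Proof.
move=> bI; apply: free_unit; first exact: enum_uniq.
move=> i j; rewrite mem_enum inE => bj.
rewrite evecB; case: (eqVneq (beta i) j) => [e|_]; last by rewrite oppr0 addr0.
by move: bj; rewrite -e bI eqxx.
Qed.

Lemma span_bvecs (R : realFieldType) r (beta : 'I_r -> 'I_r) (v : 'rV[R]_r) :
  (forall i, beta (beta i) = beta i) ->
  (forall b, beta b = b -> \sum_(i | beta i == b) v 0 i = 0) ->
  v \in <<bvecs R beta>>%VS.
Proof.
move=> bI Hb.
have -> : v = \sum_(i <- enum (nfix beta)) v 0 i *: (evec R i - evec R (beta i)).
  apply/rowP => j; rewrite summxE big_enum /=.
  under eq_bigr do rewrite mxE evecB mulrBr.
  rewrite sumrB.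
  have H1 : \sum_(i in nfix beta) v 0 i * (i == j)%:R = (j \in nfix beta)%:R * v 0 j.
    case: (boolP (j \in nfix beta)) => jN.
      rewrite (bigD1 j) //= eqxx mulr1 mul1r big1 ?addr0 //.
      by move=> i /andP[_ /negbTE ->]; rewrite mulr0.
    rewrite mul0r big1 // => i iN; case: eqP => [e|]; last by rewrite mulr0.
    by move: jN; rewrite -e iN.
  have H2 : \sum_(i in nfix beta) v 0 i * (beta i == j)%:R =
            (j \notin nfix beta)%:R * - v 0 j.
    case: (boolP (j \in nfix beta)) => jN /=.
      rewrite mul0r big1 // => i iN; case: eqP => [e|]; last by rewrite mulr0.
      by move: jN; rewrite inE -e bI eqxx.
    have bj : beta j = j by apply/eqP; move: jN; rewrite inE negbK.
    have H3 : \sum_(i | ~~ (i \in nfix beta))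
        (if beta i == j then v 0 i else 0) = v 0 j.
      rewrite (bigD1 j) /=; last by rewrite inE bj eqxx.
      rewrite bj eqxx big1 ?addr0 // => i /andP[]; rewrite inE negbK => /eqP -> /negbTE.
      by move=> ->.
    have := Hb j bj; rewrite big_mkcond /= (bigID (fun i => i \in nfix beta)) /= H3.
    move=> H; rewrite mul1r.
    have -> : \sum_(i in nfix beta) v 0 i * (beta i == j)%:R =
              \sum_(i in nfix beta) (if beta i == j then v 0 i else 0).
      by apply: eq_bigr => i _; case: eqP; rewrite ?mulr1 ?mulr0.
    by apply/eqP; rewrite -addr_eq0 H.
  rewrite H1 H2; case: (j \in nfix beta); rewrite /= ?mul1r ?mul0r ?subr0 //.
  by rewrite sub0r opprK.
rewrite big_enum /=; apply: memv_suml => i iN; apply: memvZ; apply: memv_span.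
by apply/mapP; exists i; rewrite ?mem_enum.
Qed.

Lemma extract_free (R : realFieldType) r (p0 : 'rV[R]_r) (Q : seq 'rV[R]_r) :
  exists Q', [/\ {subset Q' <= Q}, free [seq q - p0 | q <- Q'] &
    <<[seq q - p0 | q <- Q']>>%VS = <<[seq q - p0 | q <- Q]>>%VS].
Proof.
elim: Q => [|q Q [Q' [sQ fQ eQ]]]; first by exists [::]; split => //; rewrite nil_free.
case: (boolP (q - p0 \in <<[seq q - p0 | q <- Q']>>%VS)) => qin.
  exists Q'; split => //.
    by move=> x /sQ xQ; rewrite inE xQ orbT.
  rewrite /= span_cons -eQ; apply/esym/addv_idPr.
  by rewrite -memvE.
exists (q :: Q'); split => /=.
- by move=> x; rewrite !inE => /orP[->//|/sQ ->]; rewrite orbT.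
- by rewrite free_cons qin.
by rewrite !span_cons eQ.
Qed.

Lemma free_size_le (R : realFieldType) r (X : seq 'rV[R]_r) (U : {vspace 'rV[R]_r}) :
  free X -> {subset X <= U} -> (size X <= \dim U)%N.
Proof.
move=> /eqP <- sXU; apply: dimvS; exact/span_subvP.
Qed.

Lemma ub_beta (R : realFieldType) r (beta : 'I_r -> 'I_r) (P : ptset R r) p0 ps :
  (forall i, beta (beta i) = beta i) ->
  (forall q q', P q -> P q' -> forall b, beta b = b ->
     \sum_(i | beta i == b) q 0 i = \sum_(i | beta i == b) q' 0 i) ->
  aff_indep_in P p0 ps -> (size ps <= #|nfix beta|)%N.
Proof.
move=> bI Hb [P0 [Pps fr]].
have := free_size_le fr (U := <<bvecs R beta>>%VS).
rewrite size_map => H; apply: leq_trans (H _) _.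
  move=> v /mapP[q qps ->]; apply: span_bvecs => // b bb.
  under eq_bigr do rewrite !mxE.
  by rewrite sumrB (Hb q p0) ?subrr //; apply: Pps.
apply: leq_trans (dim_span _) _.
by rewrite size_map cardE.
Qed.

Lemma lb_span (R : realFieldType) r (P : ptset R r) p0 (Q w : seq 'rV[R]_r) :
  P p0 -> (forall q, q \in Q -> P q) -> free w ->
  {subset w <= <<[seq q - p0 | q <- Q]>>%VS} ->
  exists ps, aff_indep_in P p0 ps /\ (size w <= size ps)%N.
Proof.
move=> P0 PQ fw sw.
have [Q' [sQ fQ eQ]] := extract_free p0 Q.
exists Q'; split; first by split=> //; split=> // q /sQ; apply: PQ.
have := free_size_le fw (U := <<[seq q - p0 | q <- Q]>>%VS) sw.
by rewrite -eQ (eqP fQ) size_map.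
Qed.

Lemma has_dim_uniq (R : realFieldType) r (P : ptset R r) d1 d2 :
  has_dim P d1 -> has_dim P d2 -> d1 = d2.
Proof.
move=> [[p1 [ps1 [h1 s1]]] u1] [[p2 [ps2 [h2 s2]]] u2].
apply/eqP; rewrite eqn_leq; apply/andP; split.
  by rewrite -s1; exact: u2 h1.
by rewrite -s2; exact: u1 h2.
Qed.

Definition SEPb r (Fam : {set {set 'I_r}}) (G : {set 'I_r}) : bool :=
  [forall K : {set 'I_r}, (K != set0) && (K \proper G) ==>
     [exists F in Fam, [&& F \subset G, F :&: K != set0 & ~~ (F \subset K)]]].

Lemma SEPP r (Fam : {set {set 'I_r}}) (G : {set 'I_r}) :
  reflect (forall K, K != set0 -> K \proper G -> exists2 F, F \in Fam &
             [/\ F \subset G, F :&: K != set0 & ~~ (F \subset K)])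
          (SEPb Fam G).
Proof.
apply: (iffP forallP) => [H K K0 KG | H K].
  have /implyP := H K; rewrite K0 KG => /(_ isT) /existsP [F /and4P[FF a b c]].
  by exists F.
apply/implyP => /andP[K0 KG]; have [F FF [a b c]] := H K K0 KG.
by apply/existsP; exists F; rewrite FF a b c.
Qed.

Lemma closure_sep r (Fam : {set {set 'I_r}}) (G : {set 'I_r}) :
  (forall F, F \in Fam -> F != set0) ->
  G \in bclosure Fam -> (G != set0) && SEPb Fam G.
Proof.
move=> Hne; rewrite inE => /forallP /(_ [set G | (G != set0) && SEPb Fam G]).
rewrite inE => /implyP; apply; apply/and3P; split.
- apply/subsetP => F FF; rewrite inE Hne //=; apply/SEPP => K K0 KF.
  exists F => //; split => //.
    by move: KF; rewrite properE => /andP[/setIidPr ->].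
  by move: KF; rewrite properE => /andP[].
- apply/forallP => i; rewrite inE; apply/andP; split.
    by apply/set0Pn; exists i; rewrite inE.
  apply/SEPP => K K0 Ki; exfalso; move: Ki; rewrite properE subset1 (negbTE K0) orbF.
  by case/andP => /eqP -> ; rewrite subxx.
apply/forallP => G1; apply/implyP; rewrite inE => /andP[G10 /SEPP S1].
apply/forallP => G2; apply/implyP; rewrite inE => /andP[G20 /SEPP S2].
apply/implyP => /set0Pn [k]; rewrite inE => /andP[kG1 kG2].
rewrite inE; apply/andP; split.
  by apply/set0Pn; exists k; rewrite inE kG1.
apply/SEPP => K K0 KU.
have KsU : K \subset G1 :|: G2 by move: KU; rewrite properE => /andP[].
case: (boolP ((K :&: G1 != set0) && (K :&: G1 \proper G1))) => [/andP[a b]|h1].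
  have [F FF [c d e]] := S1 _ a b; exists F => //; split.
  - by apply: subset_trans c (subsetUl _ _).
  - apply: contraNneq d => e0; apply/eqP; apply/setP => x; rewrite !inE.
    by apply/negbTE; apply/negP => /and3P[xF xK xG]; move/setP: e0 => /(_ x);
       rewrite !inE xF xK.
  apply: contra e => FK; rewrite subsetI FK; exact: c.
case: (boolP ((K :&: G2 != set0) && (K :&: G2 \proper G2))) => [/andP[a b]|h2].
  have [F FF [c d e]] := S2 _ a b; exists F => //; split.
  - by apply: subset_trans c (subsetUr _ _).
  - apply: contraNneq d => e0; apply/eqP; apply/setP => x; rewrite !inE.
    by apply/negbTE; apply/negP => /and3P[xF xK xG]; move/setP: e0 => /(_ x);
       rewrite !inE xF xK.
  apply: contra e => FK; rewrite subsetI FK; exact: c.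
exfalso.
have c1 : (K :&: G1 == set0) || (G1 \subset K).
  move: h1; rewrite negb_and negbK properE subsetIr /= negbK.
  by case/orP => [->//|/subsetIP[-> _]]; rewrite orbT.
have c2 : (K :&: G2 == set0) || (G2 \subset K).
  move: h2; rewrite negb_and negbK properE subsetIr /= negbK.
  by case/orP => [->//|/subsetIP[-> _]]; rewrite orbT.
case/orP: c1 => [/eqP e1|s1]; case/orP: c2 => [/eqP e2|s2].
- move/set0Pn: K0 => [x xK]; have := subsetP KsU x xK; rewrite inE.
  by case/orP => xG; [move/setP: e1 => /(_ x)| move/setP: e2 => /(_ x)];
     rewrite !inE xK xG.
- by move/setP: e1 => /(_ k); rewrite !inE (subsetP s2 k kG2) kG1.
- by move/setP: e2 => /(_ k); rewrite !inE (subsetP s1 k kG1) kG2.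
move: KU; rewrite properE => /andP[_]; by rewrite subUset s1 s2.
Qed.

Lemma sep_closure r (Fam : {set {set 'I_r}}) (G : {set 'I_r}) :
  G != set0 -> SEPb Fam G -> G \in bclosure Fam.
Proof.
move=> /set0Pn [g0 g0G] /SEPP S; rewrite inE; apply/forallP => H; apply/implyP.
case/and3P => /subsetP FH /forallP sH /forallP cH.
suff: forall n G', #|G :\: G'| = n -> [set g0] \subset G' -> G' \subset G ->
        G' \in H -> G \in H.
  move=> /(_ _ [set g0] erefl (subxx _)); apply; first by rewrite sub1set.
  exact: sH.
elim/ltn_ind => n IH G' eN g0G' G'G G'H.
case: (eqVneq G' G) => [<-//|neq].
have G'0 : G' != set0 by apply/set0Pn; exists g0; rewrite (subsetP g0G') ?inE.
have G'p : G' \proper G by rewrite properEneq neq G'G.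
have [F FF [FG FG'0 FG']] := S G' G'0 G'p.
apply: (IH #|G :\: (G' :|: F)| _ (G' :|: F) erefl).
- rewrite -eN; apply: proper_card; rewrite properE; apply/andP; split.
    by apply: setDS; apply: subsetUl.
  apply/subsetPn; move/subsetPn: FG' => [x xF xG'].
  exists x; first by rewrite !inE xG' (subsetP FG x xF).
  by rewrite !inE xF orbT.
- exact: subset_trans g0G' (subsetUl _ _).
- by rewrite subUset G'G FG.
move: (implyP (cH G') G'H) => /forallP /(_ F) /implyP /(_ (FH F FF)) /implyP.
by apply; rewrite setIC.
Qed.

Definition sG (R : realFieldType) r (x : 'rV[R]_r) (G : {set 'I_r}) : R :=
  \sum_(i in G) x 0 i.

Lemma sG_sum (R : realFieldType) r (Fam : {set {set 'I_r}}) (y : {set 'I_r} -> 'rV[R]_r) G :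
  sG (\sum_(F in Fam) y F) G = \sum_(F in Fam) sG (y F) G.
Proof.
rewrite /sG; under eq_bigr do rewrite summxE.
by rewrite exchange_big.
Qed.

Lemma sG_add (R : realFieldType) r (x y : 'rV[R]_r) G : sG (x + y) G = sG x G + sG y G.
Proof. by rewrite /sG -big_split; apply: eq_bigr => i _; rewrite mxE. Qed.

Lemma sG_sub (R : realFieldType) r (x y : 'rV[R]_r) G : sG (x - y) G = sG x G - sG y G.
Proof. by rewrite /sG -sumrB; apply: eq_bigr => i _; rewrite !mxE. Qed.

Lemma sG_scale (R : realFieldType) r (c : R) (x : 'rV[R]_r) G : sG (c *: x) G = c * sG x G.
Proof. by rewrite /sG mulr_sumr; apply: eq_bigr => i _; rewrite !mxE. Qed.

Lemma sG_evec (R : realFieldType) r (j : 'I_r) G : sG (evec R j) G = (j \in G)%:R.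
Proof.
rewrite /sG; case: (boolP (j \in G)) => jG.
  rewrite (bigD1 j) //= evecE eqxx big1 ?addr0 // => i /andP[_ ij].
  by rewrite evecE eq_sym (negbTE ij).
rewrite big1 // => i iG; rewrite evecE; case: eqP => // e.
by rewrite e iG in jG.
Qed.

Lemma sG_supp (R : realFieldType) r (y : 'rV[R]_r) (T B : {set 'I_r}) :
  (forall i, i \notin T -> y 0 i = 0) -> sG y B = sG y (B :&: T).
Proof.
move=> H; rewrite /sG big_mkcond [RHS]big_mkcond /=; apply: eq_bigr => i _.
rewrite inE; case: (i \in B) => //=; case: (boolP (i \in T)) => // iT.
exact: H.
Qed.

Lemma sG_ge0 (R : realFieldType) r (y : 'rV[R]_r) (F G : {set 'I_r}) :
  simplexF F y -> 0 <= sG y G.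
Proof. by case/simplexP => y0 _ _; apply: sumr_ge0 => i _. Qed.

Lemma sG_simplex_sub (R : realFieldType) r (y : 'rV[R]_r) (F G : {set 'I_r}) :
  simplexF F y -> F \subset G -> sG y G = 1.
Proof.
move=> /simplexP [y0 yF y1] FG; rewrite (sG_supp _ yF).
by rewrite (setIidPr FG).
Qed.

Lemma sG_lb (R : realFieldType) r (y : 'rV[R]_r) (F G : {set 'I_r}) :
  simplexF F y -> (F \subset G)%:R <= sG y G.
Proof.
move=> sy; case: (boolP (F \subset G)) => FG.
  by rewrite (sG_simplex_sub sy FG).
exact: sG_ge0 sy.
Qed.

Lemma sG_entry (R : realFieldType) r (y : 'rV[R]_r) (F G : {set 'I_r}) k :
  simplexF F y -> k \in G -> y 0 k <= sG y G.
Proof.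
move=> /simplexP [y0 _ _] kG; rewrite /sG (bigD1 k) //= lerDl.
by apply: sumr_ge0.
Qed.

Lemma nFsubE (R : realFieldType) r (Fam : {set {set 'I_r}}) (G : {set 'I_r}) :
  nFsub R Fam G = \sum_(F in Fam) (F \subset G)%:R.
Proof.
rewrite /nFsub -sum1_card natr_sum big_mkcond /= [RHS]big_mkcond /=.
apply: eq_bigr => F _; rewrite inE; case: (F \in Fam) => //=.
by case: (F \subset G).
Qed.

Lemma card_natE (R : realFieldType) r (Fam : {set {set 'I_r}}) :
  #|Fam|%:R = \sum_(F in Fam) (1 : R) :> R.
Proof. by rewrite -sum1_card natr_sum. Qed.

Lemma valid_ineq (R : realFieldType) r (Fam : {set {set 'I_r}}) (G : {set 'I_r}) (x : 'rV[R]_r) :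
  DeltaFam Fam x -> nFsub R Fam G <= sG x G.
Proof.
move=> [y [sy ->]]; rewrite sG_sum nFsubE; apply: ler_sum => F FF.
exact: sG_lb (sy F FF).
Qed.

Lemma total_sum (R : realFieldType) r (Fam : {set {set 'I_r}}) (x : 'rV[R]_r) :
  DeltaFam Fam x -> sG x [set: 'I_r] = #|Fam|%:R.
Proof.
move=> [y [sy ->]]; rewrite sG_sum card_natE; apply: eq_bigr => F FF.
by apply: sG_simplex_sub (sy F FF) (subsetT _).
Qed.

Lemma sGT (R : realFieldType) r (x : 'rV[R]_r) :
  sG x [set: 'I_r] = \sum_(i < r) x 0 i.
Proof. by rewrite /sG; apply: eq_bigl => i; rewrite inE. Qed.

Definition cpt (R : realFieldType) r (Fam : {set {set 'I_r}}) (c : {set 'I_r} -> 'I_r) :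
  'rV[R]_r := \sum_(F in Fam) evec R (c F).

Definition upd r (c : {set 'I_r} -> 'I_r) (F0 : {set 'I_r}) (j : 'I_r) :=
  fun F => if F == F0 then j else c F.

Lemma simplex_evec (R : realFieldType) r (F : {set 'I_r}) j :
  j \in F -> simplexF F (evec R j).
Proof.
move=> jF; apply/simplexP; split.
- by move=> i; rewrite evecE ler0n.
- by move=> i iF; rewrite evecE; case: eqP => // e; rewrite e (negbTE iF) in jF.
by have := sG_evec R j F; rewrite /sG jF.
Qed.

Lemma cpt_Delta (R : realFieldType) r (Fam : {set {set 'I_r}}) c :
  (forall F, F \in Fam -> c F \in F) -> DeltaFam Fam (cpt R Fam c).
Proof. by move=> H; exists (fun F => evec R (c F)); split => // F /H /simplex_evec. Qed.

Lemma cpt_Gface (R : realFieldType) r (Fam : {set {set 'I_r}}) (G : {set 'I_r}) c :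
  (forall F, F \in Fam -> c F \in F) ->
  (forall F, F \in Fam -> (c F \in G) = (F \subset G)) ->
  Gface Fam G (cpt R Fam c).
Proof.
move=> H1 H2; split; first exact: cpt_Delta.
rewrite /cpt -/(sG _ G) sG_sum nFsubE; apply: eq_bigr => F FF.
by rewrite sG_evec H2.
Qed.

Lemma cpt_upd (R : realFieldType) r (Fam : {set {set 'I_r}}) c F0 j :
  F0 \in Fam -> cpt R Fam (upd c F0 j) - cpt R Fam c = evec R j - evec R (c F0).
Proof.
move=> F0F; rewrite /cpt (bigD1 F0) //= [X in _ - X](bigD1 F0) //= /upd eqxx.
rewrite opprD addrACA -sumrB big1 ?addr0 // => F /andP[_ /negbTE ->].
by rewrite subrr.
Qed.

Definition beta2 r (G : {set 'I_r}) (g0 h0 : 'I_r) (i : 'I_r) :=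
  if i \in G then g0 else h0.

Lemma lb_Gface (R : realFieldType) r (Fam : {set {set 'I_r}}) (G : {set 'I_r}) g0 h0 :
  (forall F, F \in Fam -> F != set0) -> [set: 'I_r] \in Fam ->
  h0 \notin G -> (G != set0 -> g0 \in G) -> SEPb Fam G ->
  exists p0 ps, aff_indep_in (Gface (R:=R) Fam G) p0 ps /\
                (#|nfix (beta2 G g0 h0)| <= size ps)%N.
Proof.
move=> Hne Htop h0G g0G /SEPP Sep.
have: forall F, exists j, F \in Fam -> j \in F /\ (j \in G) = (F \subset G).
  move=> F; case: (boolP (F \in Fam)) => FF; last by exists h0.
  case: (boolP (F \subset G)) => FG.
    have /set0Pn [j jF] := Hne F FF; exists j => _; split => //.
    exact: (subsetP FG).
  move/subsetPn: FG => [j jF jG]; exists j => _; split => //.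
  exact: negbTE.
move=> /fin_all_exists [c0 Hc0].
pose valid (F : {set 'I_r}) (j : 'I_r) := (j \in F) && ((j \in G) == (F \subset G)).
pose Q := [seq cpt R Fam (upd c0 F j) | F <- enum Fam, j <- enum [set j | valid F j]].
pose p0 := cpt R Fam c0.
have updok : forall F j, F \in Fam -> valid F j -> Gface Fam G (cpt R Fam (upd c0 F j)).
  move=> F j FF /andP[jF /eqP jG]; apply: cpt_Gface => F' F'F; rewrite /upd;
    case: eqP => [->//|_]; by case: (Hc0 F' F'F).
have P0 : Gface Fam G p0 by apply: cpt_Gface => F FF; case: (Hc0 F FF).
pose W := <<[seq q - p0 | q <- Q]>>%VS.
have inW : forall F j, F \in Fam -> valid F j -> evec R j - evec R (c0 F) \in W.
  move=> F j FF vj; rewrite -(cpt_upd R c0 j FF); apply: memv_span; apply: map_f.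
  by apply: (allpairs_f_dep (fun F j => cpt R Fam (upd c0 F j))); rewrite mem_enum ?inE.
have inW2 : forall F j k, F \in Fam -> valid F j -> valid F k ->
    evec R j - evec R k \in W.
  move=> F j k FF vj vk.
  have -> : evec R j - evec R k = (evec R j - evec R (c0 F)) - (evec R k - evec R (c0 F)).
    by rewrite opprB addrA subrK.
  by apply: memvB; apply: inW.
have fb : free (bvecs R (beta2 G g0 h0)).
  apply: free_bvecs => i; rewrite /beta2; case: (boolP (i \in G)) => iG.
    by rewrite g0G //; apply/set0Pn; exists i.
  by rewrite (negbTE h0G).
have PQ : forall q, q \in Q -> Gface Fam G q.
  move=> q /allpairsPdep [F [j [FQ jQ ->]]]; apply: updok.
    by rewrite mem_enum in FQ.
  by rewrite mem_enum inE in jQ.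
suff sw : {subset bvecs R (beta2 G g0 h0) <= W}.
  have [ps [aff sz]] := lb_span P0 PQ fb sw.
  by exists p0, ps; split => //; rewrite /bvecs size_map -cardE in sz.
move=> v /mapP [i iN ->]; rewrite /beta2; case: (boolP (i \in G)) => iG; last first.
  have vT : forall k, k \notin G -> valid [set: 'I_r] k.
    move=> k kG; rewrite /valid inE (negbTE kG) /=.
    apply/eqP/esym/negbTE/negP => /subsetP /(_ h0 (in_setT h0)).
    by rewrite (negbTE h0G).
  exact: inW2 Htop (vT _ iG) (vT _ h0G).
have G0 : G != set0 by apply/set0Pn; exists i.
pose K := [set k in G | evec R k - evec R g0 \in W].
suff: K == G.
  by move/eqP/setP/(_ i); rewrite !inE iG /= => ->.
apply/negPn/negP => KG.
have Kp : K \proper G by rewrite properEneq KG; apply/subsetP => k; rewrite inE => /andP[].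
have K0 : K != set0 by apply/set0Pn; exists g0; rewrite inE g0G // subrr mem0v.
have [F FF [FG /set0Pn [a] FK nFK]] := Sep K K0 Kp.
move: FK; rewrite !inE => /and3P[aF aG aW].
move/subsetPn: nFK => [b bF bK].
have vF : forall k, k \in F -> valid F k by move=> k kF; rewrite /valid kF FG (subsetP FG).
move: bK; rewrite inE (subsetP FG b bF) /=; apply/negP/negPn.
have -> : evec R b - evec R g0 = (evec R b - evec R a) + (evec R a - evec R g0).
  by rewrite addrA subrK.
by apply: memvD => //; apply: inW2 FF (vF _ bF) (vF _ aF).
Qed.

Lemma sG_compl (R : realFieldType) r (x : 'rV[R]_r) (G : {set 'I_r}) :
  sG x (~: G) = sG x [set: 'I_r] - sG x G.
Proof.
rewrite /sG [X in _ = X - _](bigID (fun i => i \in G)) /=.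
have -> : \sum_(i in [set: 'I_r] | i \in G) x 0 i = \sum_(i in G) x 0 i.
  by apply: eq_bigl => i; rewrite !inE.
rewrite addrC addrK; apply: eq_bigl => i; by rewrite !inE.
Qed.

Lemma aff_mono (R : realFieldType) r (P P' : ptset R r) p0 ps :
  (forall x, P x -> P' x) -> aff_indep_in P p0 ps -> aff_indep_in P' p0 ps.
Proof. by move=> H [a [b c]]; split; [apply: H|split=> // q /b /H]. Qed.

Lemma ub_Gface (R : realFieldType) r (Fam : {set {set 'I_r}}) (G : {set 'I_r}) g0 h0 p0 ps :
  h0 \notin G -> (G != set0 -> g0 \in G) ->
  aff_indep_in (Gface (R:=R) Fam G) p0 ps -> (size ps <= #|nfix (beta2 G g0 h0)|)%N.
Proof.
move=> h0G g0G; apply: ub_beta.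
  move=> i; rewrite /beta2; case: (boolP (i \in G)) => iG.
    by rewrite g0G //; apply/set0Pn; exists i.
  by rewrite (negbTE h0G).
move=> q q' [Dq sq] [Dq' sq'] b; rewrite /beta2; case: (boolP (b \in G)) => bG bb.
  have E : forall x : 'rV[R]_r, \sum_(i | (if i \in G then g0 else h0) == b) x 0 i = sG x G.
    move=> x; apply: eq_bigl => i; rewrite -bb; case: (boolP (i \in G)) => iG.
      by rewrite eqxx.
    apply/negbTE; apply: contraNneq h0G => ->; rewrite bb; exact: bG.
  rewrite !E; rewrite /sG in sq sq' *; by rewrite sq sq'.
have E : forall x : 'rV[R]_r, \sum_(i | (if i \in G then g0 else h0) == b) x 0 i = sG x (~: G).
  move=> x; apply: eq_bigl => i; rewrite !inE -bb; case: (boolP (i \in G)) => iG /=.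
    apply/negbTE; apply: contraNneq h0G => <-; apply: g0G; apply/set0Pn; by exists i.
  by rewrite eqxx.
rewrite !E !sG_compl (total_sum Dq) (total_sum Dq'); rewrite /sG in sq sq' *; by rewrite sq sq'.
Qed.

Lemma card_nfix2 r (G : {set 'I_r}) g0 h0 :
  h0 \notin G -> g0 \in G -> #|nfix (beta2 G g0 h0)| = (r - 2)%N.
Proof.
move=> h0G g0G.
have -> : nfix (beta2 G g0 h0) = ~: [set g0; h0].
  apply/setP => i; rewrite !inE /beta2; case: (boolP (i \in G)) => iG.
    case: (eqVneq i h0) => [e|_]; first by rewrite -e iG in h0G.
    by rewrite orbF eq_sym.
  case: (eqVneq i g0) => [e|_]; first by rewrite e g0G in iG.
  by rewrite eq_sym.
rewrite cardsCs setCK cards2 card_ord.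
by case: (eqVneq g0 h0) => // e; rewrite -e g0G in h0G.
Qed.

Lemma card_nfix1 r (h0 : 'I_r) :
  #|nfix (beta2 set0 h0 h0)| = (r - 1)%N.
Proof.
have -> : nfix (beta2 set0 h0 h0) = ~: [set h0].
  by apply/setP => i; rewrite !inE /beta2 inE eq_sym.
by rewrite cardsCs setCK cards1 card_ord.
Qed.

Lemma has_dimI (R : realFieldType) r (P : ptset R r) N :
  (exists p0 ps, aff_indep_in P p0 ps /\ (N <= size ps)%N) ->
  (forall p0 ps, aff_indep_in P p0 ps -> (size ps <= N)%N) -> has_dim P N.
Proof.
move=> [p0 [ps [aff le]]] ub; split => //; exists p0, ps; split => //.
by apply/eqP; rewrite eqn_leq le (ub p0).
Qed.

Lemma SEP0 r (Fam : {set {set 'I_r}}) : SEPb Fam set0.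
Proof.
apply/SEPP => K K0; rewrite properE => /andP[K0' _]; exfalso.
by move: K0; rewrite subset0 in K0'; rewrite K0'.
Qed.

Lemma Delta_Gface0 (R : realFieldType) r (Fam : {set {set 'I_r}}) x :
  (forall F, F \in Fam -> F != set0) -> DeltaFam (R:=R) Fam x -> Gface Fam set0 x.
Proof.
move=> Hne Dx; split => //; rewrite nFsubE big_set0 big1 // => F FF.
by rewrite subset0 (negbTE (Hne F FF)).
Qed.

Lemma dim_Delta (R : realFieldType) r (Fam : {set {set 'I_r}}) :
  (forall F, F \in Fam -> F != set0) -> [set: 'I_r] \in Fam ->
  has_dim (DeltaFam (R:=R) Fam) r.-1.
Proof.
move=> Hne Htop; have /set0Pn [h0 _] := Hne _ Htop.
rewrite -subn1 -(card_nfix1 h0); apply: has_dimI.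
  have [p0 [ps [aff le]]] := lb_Gface R (G := set0) (g0 := h0) Hne Htop (negbT (in_set0 h0))
    (fun h => False_ind _ (negP h (eqxx _))) (SEP0 Fam).
  by exists p0, ps; split => //; apply: aff_mono aff => x [].
move=> p0 ps aff; apply: (ub_Gface (G := set0) (g0 := h0) (negbT (in_set0 h0))).
  by move=> /eqP.
by apply: aff_mono aff => x; apply: Delta_Gface0.
Qed.

Lemma dim_Gface (R : realFieldType) r (Fam : {set {set 'I_r}}) (G : {set 'I_r}) :
  (forall F, F \in Fam -> F != set0) -> [set: 'I_r] \in Fam ->
  G \in bclosure Fam -> G != [set: 'I_r] ->
  has_dim (Gface (R:=R) Fam G) (r - 2) /\ (2 <= r)%N.
Proof.
move=> Hne Htop GB GT.
have /andP[/set0Pn [g0 g0G] Sep] := closure_sep Hne GB.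
have [h0 _ h0G] : exists2 h0, h0 \in [set: 'I_r] & h0 \notin G.
  by apply/subsetPn; apply: contra GT => TG; rewrite eqEsubset TG subsetT.
split.
  rewrite -(card_nfix2 h0G g0G); apply: has_dimI.
    exact: (lb_Gface R (G := G) (g0 := g0) Hne Htop h0G (fun _ => g0G) Sep).
  by move=> p0 ps aff; apply: ub_Gface h0G (fun _ => g0G) aff.
have c2 : #|[set g0; h0]| = 2.
  by rewrite cards2; case: (eqVneq g0 h0) => // e; rewrite -e g0G in h0G.
apply: (@leq_trans #|[set g0; h0]|); first by rewrite c2.
by rewrite -[X in (_ <= X)%N](card_ord r); apply: max_card.
Qed.

Lemma choice_G r (Fam : {set {set 'I_r}}) (G : {set 'I_r}) (h : 'I_r) :
  (forall F, F \in Fam -> F != set0) ->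
  exists c : {set 'I_r} -> 'I_r,
    forall F, F \in Fam -> c F \in F /\ (c F \in G) = (F \subset G).
Proof.
move=> Hne.
have: forall F, exists j, F \in Fam -> j \in F /\ (j \in G) = (F \subset G).
  move=> F; case: (boolP (F \in Fam)) => FF; last by exists h.
  case: (boolP (F \subset G)) => FG.
    have /set0Pn [j jF] := Hne F FF; exists j => _; split => //.
    exact: (subsetP FG).
  move/subsetPn: FG => [j jF jG]; exists j => _; split => //.
  exact: negbTE.
by move=> /fin_all_exists.
Qed.

Lemma dotp_ind (R : realFieldType) r (G : {set 'I_r}) (x : 'rV[R]_r) :
  dotp (\row_i (if i \in G then -1 else 0)) x = - sG x G.
Proof.
rewrite /dotp /sG -sumrN [RHS]big_mkcond /=; apply: eq_bigr => i _; rewrite mxE.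
by case: (i \in G); rewrite ?mulN1r ?mul0r ?oppr0.
Qed.

Lemma Gface_face (R : realFieldType) r (Fam : {set {set 'I_r}}) (G : {set 'I_r}) :
  face (DeltaFam (R:=R) Fam) (Gface Fam G).
Proof.
exists (\row_i (if i \in G then -1 else 0)), (- nFsub R Fam G); split.
  by move=> x Dx; rewrite dotp_ind lerN2; apply: valid_ineq.
move=> x; rewrite dotp_ind; split => [[Dx e]|[Dx e]]; split => //.
  by rewrite /sG e.
by apply: oppr_inj.
Qed.

Lemma part3 (R : realFieldType) r (Fam : {set {set 'I_r}}) (G1 G2 : {set 'I_r}) :
  (forall F, F \in Fam -> F != set0) -> [set: 'I_r] \in Fam ->
  G1 != [set: 'I_r] -> G2 != [set: 'I_r] ->
  seteqP (Gface (R:=R) Fam G1) (Gface (R:=R) Fam G2) -> G1 = G2.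
Proof.
suff W : forall G1 G2 : {set 'I_r}, (forall F, F \in Fam -> F != set0) ->
    [set: 'I_r] \in Fam -> G1 != [set: 'I_r] ->
    (forall x, Gface (R:=R) Fam G2 x -> Gface (R:=R) Fam G1 x) -> G1 \subset G2.
  move=> Hne Htop T1 T2 E; apply/eqP; rewrite eqEsubset.
  rewrite (W G1 G2) ?(W G2 G1) // => x; by case: (E x).
move=> {G1 G2} G1 G2 Hne Htop T1 H; apply/subsetP => i iG1; apply/negPn/negP => iG2.
have [c Hc] := choice_G G2 i Hne.
pose c' := upd c [set: 'I_r] i.
have Hc' : forall F, F \in Fam -> c' F \in F /\ (c' F \in G2) = (F \subset G2).
  move=> F FF; rewrite /c' /upd; case: eqP => [->|_]; last exact: Hc.
  split; first by rewrite inE.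
  rewrite (negbTE iG2); apply/esym/negbTE/negP => /subsetP /(_ i (in_setT i)).
  by rewrite (negbTE iG2).
have := H _ (cpt_Gface R (fun F FF => proj1 (Hc' F FF)) (fun F FF => proj2 (Hc' F FF))).
move=> [_]; rewrite -/(sG _ G1) /cpt sG_sum nFsubE.
rewrite (bigD1 [set: 'I_r]) // [X in _ = X](bigD1 [set: 'I_r]) //= => E.
have : (([set: 'I_r] \subset G1)%:R : R) + \sum_(F in Fam | F != [set: 'I_r]) (F \subset G1)%:R <
       sG (evec R (c' [set: 'I_r])) G1 + \sum_(F in Fam | F != [set: 'I_r]) sG (evec R (c' F)) G1.
  apply: ltr_leD.
    rewrite sG_evec /c' /upd eqxx iG1.
    have -> : ([set: 'I_r] \subset G1) = false.
      apply/negbTE; apply: contra T1 => TG; by rewrite eqEsubset TG subsetT.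
    by rewrite ltr01.
  apply: ler_sum => F /andP[FF _]; rewrite sG_evec.
  case: (boolP (F \subset G1)) => FG //.
  by rewrite (subsetP FG) //; case: (Hc' F FF).
by rewrite E ltxx.
Qed.

Definition unif (R : realFieldType) r (S : {set 'I_r}) : 'rV[R]_r :=
  \sum_(i in S) (#|S|%:R)^-1 *: evec R i.

Lemma unifE (R : realFieldType) r (S : {set 'I_r}) k :
  unif R S 0 k = (k \in S)%:R * (#|S|%:R)^-1.
Proof. by rewrite /unif combE. Qed.

Lemma cardS_neq0 (R : realFieldType) r (S : {set 'I_r}) :
  S != set0 -> (#|S|%:R : R) != 0.
Proof. by move=> S0; rewrite pnatr_eq0 cards_eq0. Qed.

Lemma simplex_unif (R : realFieldType) r (S : {set 'I_r}) :
  S != set0 -> simplexF S (unif R S).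
Proof.
move=> S0; apply/simplexP; split.
- by move=> j; rewrite unifE mulr_ge0 ?invr_ge0 ?ler0n.
- by move=> j jS; rewrite unifE (negbTE jS) mul0r.
rewrite (eq_bigr (fun _ => (#|S|%:R)^-1)); last by move=> j jS; rewrite unifE jS mul1r.
by rewrite sumr_const -[(_^-1) *+ _]mulr_natr mulVf // cardS_neq0.
Qed.

Lemma unif_lb (R : realFieldType) r (S G : {set 'I_r}) k :
  k \in S -> k \in G -> (r%:R)^-1 <= sG (unif R S) G.
Proof.
move=> kS kG.
have S0 : S != set0 by apply/set0Pn; exists k.
apply: le_trans (sG_entry (simplex_unif R S0) kG); rewrite unifE kS mul1r.
rewrite lef_pV2 ?posrE ?ltr0n ?lt0n ?cards_eq0 //; last first.
  by apply/eqP => r0; move: k {kS kG}; rewrite r0 => -[].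
by rewrite ler_nat -[X in (_ <= X)%N](card_ord r) max_card.
Qed.

From mathcomp Require Import lra.

Lemma part5 (R : realFieldType) r (Fam : {set {set 'I_r}}) (G0 : {set 'I_r}) :
  (forall F, F \in Fam -> F != set0) -> [set: 'I_r] \in Fam ->
  G0 \in bclosure Fam -> G0 != [set: 'I_r] ->
  exists x : 'rV[R]_r,
    Hsys Fam (bclosure Fam :\ G0) x /\ ~ Hsys Fam (bclosure Fam) x.
Proof.
move=> Hne Htop G0B G0T.
have /andP[/set0Pn [g0 g0G] /SEPP Sep] := closure_sep Hne G0B.
have [h0 _ h0G] : exists2 h0, h0 \in [set: 'I_r] & h0 \notin G0.
  by apply/subsetPn; apply: contra G0T => TG; rewrite eqEsubset TG subsetT.
pose SF (F : {set 'I_r}) := if F \subset G0 then F else F :\: G0.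
have SF0 : forall F, F \in Fam -> SF F != set0.
  move=> F FF; rewrite /SF; case: ifP => FG; first exact: Hne.
  apply/set0Pn; move/negbT/subsetPn: FG => [j jF jG]; exists j; by rewrite inE jG.
have SFF : forall F, SF F \subset F.
  by move=> F; rewrite /SF; case: ifP => // _; apply: subsetDl.
pose eps : R := (r%:R)^-1.
pose x := \sum_(F in Fam) unif R (SF F) + eps *: (evec R h0 - evec R g0).
have simp : forall F, F \in Fam -> simplexF (SF F) (unif R (SF F)).
  by move=> F FF; apply: simplex_unif; apply: SF0.
have sx : forall G, sG x G = \sum_(F in Fam) sG (unif R (SF F)) G +
                               eps * ((h0 \in G)%:R - (g0 \in G)%:R).
  by move=> G; rewrite /x sG_add sG_sum sG_scale sG_sub !sG_evec.
have tot : sG x [set: 'I_r] = #|Fam|%:R.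
  rewrite sx !inE subrr mulr0 addr0 card_natE; apply: eq_bigr => F FF.
  exact: sG_simplex_sub (simp F FF) (subsetT _).
have tot' : \sum_(i < r) x 0 i = #|Fam|%:R by rewrite -sGT.
have eps0 : 0 < eps by rewrite invr_gt0 ltr0n; apply: (leq_ltn_trans (leq0n h0)).
exists x; split.
  split => // G; rewrite in_setD1 => /andP[GG0 GB]; rewrite -/(sG x G).
  case: (eqVneq G [set: 'I_r]) => [->|GT].
    rewrite tot /nFsub ler_nat; apply: subset_leq_card.
    by apply/subsetP => F; rewrite inE => /andP[].
  have [F1 F1F [k [F1G kS kG]]] : exists2 F1, F1 \in Fam &
      exists k, [/\ ~~ (F1 \subset G), k \in SF F1 & k \in G].
    case: (boolP [exists k, (k \notin G0) && (k \in G)]).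
      move=> /existsP [k /andP[kG0 kG]]; exists [set: 'I_r] => //; exists k; split => //.
      - by apply: contra GT => TG; rewrite eqEsubset TG subsetT.
      rewrite /SF; case: ifP => [/subsetP /(_ h0 (in_setT h0))|_].
        by rewrite (negbTE h0G).
      by rewrite !inE kG0.
    rewrite negb_exists => /forallP nG.
    have GsG0 : G \subset G0.
      apply/subsetP => k kG; move: (nG k); rewrite kG andbT negbK; exact.
    have /andP[G0' _] := closure_sep Hne GB.
    have Gp : G \proper G0 by rewrite properEneq GG0 GsG0.
    have [F FF [FG0 /set0Pn [k] FGk FG]] := Sep G G0' Gp.
    move: FGk; rewrite inE => /andP[kF kG].
    by exists F => //; exists k; split => //; rewrite /SF FG0.
  have h1 : eps <= sG (unif R (SF F1)) G by apply: unif_lb kS kG.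
  have h2 : \sum_(F in Fam | F != F1) ((F \subset G)%:R : R) <=
            \sum_(F in Fam | F != F1) sG (unif R (SF F)) G.
    apply: ler_sum => F /andP[FF _].
    apply: le_trans (sG_lb G (simp F FF)); rewrite ler_nat.
    case: (boolP (F \subset G)) => // FG; by rewrite (subset_trans (SFF F) FG).
  have h3 : - eps <= eps * ((h0 \in G)%:R - (g0 \in G)%:R).
    case: (h0 \in G); case: (g0 \in G); rewrite /=.
    - by rewrite subrr mulr0 oppr_le0 ltW.
    - by rewrite subr0 mulr1; lra.
    - by rewrite sub0r mulrN1.
    by rewrite subrr mulr0 oppr_le0 ltW.
  rewrite sx nFsubE (bigD1 F1) //= [X in _ <= X + _](bigD1 F1) //= (negbTE F1G) add0r.
  apply: le_trans h2 _; rewrite addrAC lerDr.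
  by apply: le_trans (lerD h1 h3); rewrite subrr.
move=> [_ /(_ G0 G0B)]; rewrite -/(sG x G0) sx nFsubE.
rewrite (negbTE h0G) g0G sub0r mulrN1.
have -> : \sum_(F in Fam) sG (unif R (SF F)) G0 = \sum_(F in Fam) (F \subset G0)%:R.
  apply: eq_bigr => F FF; rewrite /SF; case: ifP => FG.
    by apply: (sG_simplex_sub (F := F)) => //; move: (simp F FF); rewrite /SF FG.
  rewrite (sG_supp _ (T := F :\: G0)); last first.
    by move=> i iS; rewrite unifE (negbTE iS) mul0r.
  rewrite (_ : G0 :&: (F :\: G0) = set0) ?/sG ?big_set0 //.
  by apply/setP => i; rewrite !inE; case: (i \in G0); rewrite ?andbF.
apply/negP; rewrite lerDl oppr_ge0 -ltNge; exact: eps0.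
Qed.

Definition Mx (R : realFieldType) r (a : 'rV[R]_r) (F : {set 'I_r}) : {set 'I_r} :=
  [set i in F | [forall j in F, a 0 j <= a 0 i]].

Lemma dotpD (R : realFieldType) r (a x y : 'rV[R]_r) : dotp a (x + y) = dotp a x + dotp a y.
Proof. by rewrite /dotp -big_split; apply: eq_bigr => i _; rewrite mxE mulrDr. Qed.

Lemma dotpB (R : realFieldType) r (a x y : 'rV[R]_r) : dotp a (x - y) = dotp a x - dotp a y.
Proof. by rewrite /dotp -sumrB; apply: eq_bigr => i _; rewrite !mxE mulrBr. Qed.

Lemma dotp_evec (R : realFieldType) r (a : 'rV[R]_r) j : dotp a (evec R j) = a 0 j.
Proof.
rewrite /dotp (bigD1 j) //= evecE eqxx mulr1 big1 ?addr0 // => i ij.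
by rewrite evecE eq_sym (negbTE ij) mulr0.
Qed.

Lemma argmax_ex (R : realFieldType) r (a : 'rV[R]_r) (F : {set 'I_r}) i0 :
  i0 \in F -> exists2 k, k \in F & forall j, j \in F -> a 0 j <= a 0 k.
Proof. by move=> h; case: (arg_maxP (fun i => a 0 i) h) => k kF H; exists k. Qed.

Lemma supp_face (R : realFieldType) r (Fam : {set {set 'I_r}}) (a : 'rV[R]_r) b
    (y : {set 'I_r} -> 'rV[R]_r) :
  (forall x, DeltaFam Fam x -> dotp a x <= b) ->
  (forall F, F \in Fam -> simplexF F (y F)) ->
  dotp a (\sum_(F in Fam) y F) = b ->
  forall F, F \in Fam -> forall i, y F 0 i != 0 -> i \in Mx a F.
Proof.
move=> val sy eb F FF i yi.
have /simplexP [y0 yF y1] := sy F FF.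
have iF : i \in F by apply: contraNT yi => iF; rewrite yF.
have sw : forall j, j \in F -> a 0 j <= dotp a (y F).
  move=> j jF.
  pose y' G := if G == F then evec R j else y G.
  have D' : DeltaFam Fam (\sum_(G in Fam) y' G).
    exists y'; split => // G GF; rewrite /y'; case: eqP => [->|_]; last exact: sy.
    exact: simplex_evec.
  have := val _ D'; rewrite (bigD1 F) //= /y' eqxx.
  move: eb; rewrite (bigD1 F) //= dotpD => eb.
  have -> : \sum_(G in Fam | G != F) (if G == F then evec R j else y G) =
            \sum_(G in Fam | G != F) y G.
    by apply: eq_bigr => G /andP[_ /negbTE ->].
  rewrite dotpD dotp_evec -eb lerD2r; exact.
have [k kF kmax] := argmax_ex a iF.
have tot : \sum_(l < r) y F 0 l = 1.
  by rewrite -sGT; apply: sG_simplex_sub (sy F FF) (subsetT _).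
have nn : forall l : 'I_r, true -> 0 <= y F 0 l * (a 0 k - a 0 l).
  move=> l _; case: (boolP (l \in F)) => lF; last by rewrite yF ?mul0r.
  by rewrite mulr_ge0 // subr_ge0 kmax.
have sum0 : \sum_(l < r) y F 0 l * (a 0 k - a 0 l) = 0.
  apply/eqP; rewrite eq_le sumr_ge0 ?andbT; last by move=> l _; apply: nn.
  under eq_bigr do rewrite mulrBr.
  rewrite sumrB -big_distrl /= tot mul1r subr_le0.
  have := sw k kF; rewrite /dotp.
  by under eq_bigr do rewrite mulrC.
have := psumr_eq0P nn sum0 (i := i) isT.
move/eqP; rewrite mulf_eq0 (negbTE yi) /= subr_eq0 => /eqP aik.
rewrite inE iF /=; apply/forall_inP => j jF; rewrite -aik; exact: kmax.
Qed.

Definition compat (R : realFieldType) r (Fam : {set {set 'I_r}}) (a : 'rV[R]_r) (B : {set 'I_r}) :=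
  forall F, F \in Fam -> (Mx a F \subset B) || (Mx a F :&: B == set0).

Lemma block_const (R : realFieldType) r (Fam : {set {set 'I_r}}) (a : 'rV[R]_r) b B x :
  (forall x, DeltaFam Fam x -> dotp a x <= b) -> compat Fam a B ->
  DeltaFam Fam x -> dotp a x = b ->
  sG x B = \sum_(F in Fam) (Mx a F \subset B)%:R.
Proof.
move=> val cB [y [sy ->]] eb; rewrite sG_sum; apply: eq_bigr => F FF.
have supp : forall i, i \notin Mx a F -> y F 0 i = 0.
  move=> i iM; apply/eqP; apply: contraNT iM; exact: supp_face val sy eb F FF i.
have one : sG (y F) (Mx a F) = 1.
  rewrite -(sG_simplex_sub (sy F FF) (subsetT F)) [RHS](sG_supp _ supp).
  by rewrite setTI.
rewrite (sG_supp _ supp); case: (boolP (Mx a F \subset B)) => MB.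
  by rewrite (setIidPr MB).
have := cB F FF; rewrite (negbTE MB) /= setIC => /eqP ->.
by rewrite /sG big_set0.
Qed.

Definition beta3 r (B1 B2 : {set 'I_r}) (b1 b2 b3 : 'I_r) (i : 'I_r) :=
  if i \in B1 then b1 else if i \in B2 then b2 else b3.

Lemma sG_U (R : realFieldType) r (x : 'rV[R]_r) (B1 B2 : {set 'I_r}) :
  B1 :&: B2 == set0 -> sG x (B1 :|: B2) = sG x B1 + sG x B2.
Proof.
move=> /eqP d; rewrite /sG (bigID (fun i => i \in B1)) /=; congr (_ + _).
  by apply: eq_bigl => i; rewrite inE; case: (i \in B1); rewrite ?andbF ?andbT ?orbT.
apply: eq_bigl => i; rewrite inE; case: (boolP (i \in B1)) => i1 /=; last by rewrite andbT.
by apply/esym/negbTE/negP => i2; move/setP: d => /(_ i); rewrite !inE i1 i2.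
Qed.

Lemma three_blocks (R : realFieldType) r (P : ptset R r) (B1 B2 : {set 'I_r}) b1 b2 b3 p0 ps :
  (forall x x', P x -> P x' -> sG x B1 = sG x' B1) ->
  (forall x x', P x -> P x' -> sG x B2 = sG x' B2) ->
  (forall x x', P x -> P x' -> sG x [set: 'I_r] = sG x' [set: 'I_r]) ->
  B1 :&: B2 == set0 -> b1 \in B1 -> b2 \in B2 -> b3 \notin B1 :|: B2 ->
  aff_indep_in P p0 ps -> (size ps + 3 <= r)%N.
Proof.
move=> c1 c2 cT d b1B b2B b3B aff.
have b2B1 : b2 \notin B1.
  by apply/negP => h; move/eqP/setP: d => /(_ b2); rewrite !inE h b2B.
move: b3B; rewrite inE negb_or => /andP[b3B1 b3B2].
have bI : forall i, beta3 B1 B2 b1 b2 b3 (beta3 B1 B2 b1 b2 b3 i) = beta3 B1 B2 b1 b2 b3 i.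
  move=> i; rewrite /beta3; case: (i \in B1); rewrite ?b1B //.
  case: (i \in B2); rewrite ?(negbTE b2B1) ?b2B //.
  by rewrite (negbTE b3B1) (negbTE b3B2).
have b1b2 : b1 != b2 by apply: contraNneq b2B1 => <-.
have b1b3 : b1 != b3 by apply: contraNneq b3B1 => <-.
have b2b3 : b2 != b3 by apply: contraNneq b3B2 => <-.
have fib : forall (x : 'rV[R]_r) (B : {set 'I_r}) b,
    (forall i, (beta3 B1 B2 b1 b2 b3 i == b) = (i \in B)) ->
    \sum_(i | beta3 B1 B2 b1 b2 b3 i == b) x 0 i = sG x B.
  by move=> x B b H; apply: eq_bigl => i; rewrite H.
have := ub_beta bI _ aff.
move=> /(_ _) H.
have le : (size ps <= #|nfix (beta3 B1 B2 b1 b2 b3)|)%N.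
  apply: H => q q' Pq Pq' b; rewrite {1}/beta3.
  have F1 : forall i, (beta3 B1 B2 b1 b2 b3 i == b1) = (i \in B1).
    move=> i; rewrite /beta3.
    case: (i \in B1); rewrite ?eqxx //; case: (i \in B2).
      by rewrite eq_sym (negbTE b1b2).
    by rewrite eq_sym (negbTE b1b3).
  have F2 : forall i, (beta3 B1 B2 b1 b2 b3 i == b2) = (i \in B2).
    move=> i; rewrite /beta3.
    case: (boolP (i \in B1)) => i1.
      rewrite (negbTE b1b2); apply/esym/negbTE/negP => i2.
      by move/eqP/setP: d => /(_ i); rewrite !inE i1 i2.
    by case: (i \in B2); rewrite ?eqxx // eq_sym (negbTE b2b3).
  have F3 : forall i, (beta3 B1 B2 b1 b2 b3 i == b3) = (i \in ~: (B1 :|: B2)).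
    move=> i; rewrite /beta3 !inE.
    case: (i \in B1); rewrite ?(negbTE b1b3) //.
    by case: (i \in B2); rewrite ?(negbTE b2b3) ?eqxx.
  case: (boolP (b \in B1)) => bB1 => [<-|].
    by rewrite !(fib _ _ _ F1) (c1 q q').
  case: (boolP (b \in B2)) => bB2 => [<-|<-].
    by rewrite !(fib _ _ _ F2) (c2 q q').
  rewrite !(fib _ _ _ F3).
  by rewrite !sG_compl !sG_U // (c1 q q') // (c2 q q') // (cT q q').
have sub : nfix (beta3 B1 B2 b1 b2 b3) \subset ~: (b1 |: (b2 |: [set b3])).
  apply/subsetP => i; rewrite !inE /beta3 => ni; apply/negP => /or3P[] /eqP e;
    move: ni; rewrite e.
  - by rewrite b1B eqxx.
  - by rewrite (negbTE b2B1) b2B eqxx.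
  by rewrite (negbTE b3B1) (negbTE b3B2) eqxx.
have c3 : #|b1 |: (b2 |: [set b3])| = 3.
  rewrite cardsU1 cardsU1 cards1 !inE (negbTE b1b2) (negbTE b1b3) (negbTE b2b3).
  by [].
have := subset_leq_card sub; rewrite [X in (_ <= X)%N]cardsCs setCK c3 card_ord => h.
have r3 : (3 <= r)%N.
  apply: (@leq_trans #|b1 |: (b2 |: [set b3])|); first by rewrite c3.
  by rewrite -[X in (_ <= X)%N](card_ord r) max_card.
have := leq_trans le h; move: r3; clear; lia.
Qed.

Lemma dotp_two (R : realFieldType) r (a x : 'rV[R]_r) (G : {set 'I_r}) (m t : R) :
  (forall i, i \in G -> a 0 i = t) -> (forall i, i \notin G -> a 0 i = m) ->
  dotp a x = m * sG x [set: 'I_r] - (m - t) * sG x G.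
Proof.
move=> Ht Hm; rewrite sGT /sG mulr_sumr mulr_sumr [X in _ - X]big_mkcond /= -sumrB.
apply: eq_bigr => i _; case: (boolP (i \in G)) => iG.
  by rewrite Ht // mulrBl opprB addrC subrK.
by rewrite Hm // subr0.
Qed.

Lemma face_eq (R : realFieldType) r (Fam : {set {set 'I_r}}) (a : 'rV[R]_r) b p0
    (G : {set 'I_r}) (m t : R) (h : 'I_r) :
  (forall F, F \in Fam -> F != set0) ->
  (forall i, i \in G -> a 0 i = t) -> (forall i, i \notin G -> a 0 i = m) -> t < m ->
  (forall x, DeltaFam Fam x -> dotp a x <= b) ->
  DeltaFam Fam p0 -> dotp a p0 = b ->
  forall x, (DeltaFam (R:=R) Fam x /\ dotp a x = b) <-> Gface Fam G x.
Proof.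
move=> Hne Ht Hm tm val D0 e0.
have [c Hc] := choice_G G h Hne.
have Dg := cpt_Gface R (fun F FF => proj1 (Hc F FF)) (fun F FF => proj2 (Hc F FF)).
set g := cpt R Fam c in Dg.
have E : forall x, DeltaFam (R:=R) Fam x ->
    dotp a x = m * #|Fam|%:R - (m - t) * sG x G.
  by move=> x Dx; rewrite (dotp_two x Ht Hm) (total_sum Dx).
have mt : 0 < m - t by rewrite subr_gt0.
case: Dg => Dg sg; rewrite -/(sG g G) in sg.
have s0 : sG p0 G = nFsub R Fam G.
  apply/eqP; rewrite eq_le valid_ineq // andbT.
  have := val g Dg; rewrite E // -e0 E // lerD2l lerN2 sg.
  by rewrite ler_pM2l.
move=> x; split => [[Dx ex]|[Dx sx]].
  split => //; rewrite -/(sG x G); move: ex; rewrite -e0 E // E // => /addrI.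
  by move/oppr_inj/(mulfI (lt0r_neq0 mt)) => ->.
split => //; rewrite -e0 E // E //; rewrite -/(sG x G) in sx; by rewrite sx s0.
Qed.

Definition Amax (R : realFieldType) r (a : 'rV[R]_r) : {set 'I_r} :=
  [set i | [forall j, a 0 j <= a 0 i]].

Lemma Mx_sub (R : realFieldType) r (a : 'rV[R]_r) (F : {set 'I_r}) : Mx a F \subset F.
Proof. by apply/subsetP => i; rewrite inE => /andP[]. Qed.

Lemma Mx_A (R : realFieldType) r (a : 'rV[R]_r) (F : {set 'I_r}) k :
  k \in F -> k \in Amax a -> Mx a F \subset Amax a.
Proof.
move=> kF kA; apply/subsetP => i; rewrite !inE => /andP[iF /forall_inP Hi].
apply/forallP => j; apply: le_trans (Hi k kF).
by move: kA; rewrite inE => /forallP.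
Qed.

Lemma compat_A (R : realFieldType) r (Fam : {set {set 'I_r}}) (a : 'rV[R]_r) :
  compat Fam a (Amax a).
Proof.
move=> F FF; case: (boolP [exists k, (k \in F) && (k \in Amax a)]).
  by move=> /existsP [k /andP[kF kA]]; rewrite (Mx_A kF kA).
rewrite negb_exists => /forallP H; apply/orP; right; apply/eqP/setP => i.
rewrite !inE; apply/negbTE; apply/negP => /andP[/andP[iF _] iA].
by move: (H i); rewrite iF /= inE iA.
Qed.

Lemma compat_sub (R : realFieldType) r (Fam : {set {set 'I_r}}) (a : 'rV[R]_r) (B : {set 'I_r}) :
  B \subset ~: Amax a ->
  (forall F, F \in Fam -> F \subset ~: Amax a -> (Mx a F \subset B) || (Mx a F :&: B == set0)) ->
  compat Fam a B.
Proof.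
move=> BA H F FF; case: (boolP (F \subset ~: Amax a)) => FA; first exact: H.
move/subsetPn: FA => [k kF]; rewrite inE negbK => kA.
apply/orP; right; apply/eqP/setP => i; rewrite [in RHS]inE; apply/negbTE/negP; rewrite in_setI => /andP[iM iB].
have := subsetP (Mx_A kF kA) i iM; have := subsetP BA i iB.
by rewrite inE => /negbTE ->.
Qed.

Lemma part4 (R : realFieldType) r (Fam : {set {set 'I_r}}) (S : ptset R r) :
  (forall F, F \in Fam -> F != set0) -> [set: 'I_r] \in Fam ->
  facet (DeltaFam (R:=R) Fam) S ->
  exists2 G, G \in bclosure Fam & G != [set: 'I_r] /\ seteqP S (Gface (R:=R) Fam G).
Proof.
move=> Hne Htop [[a [b [val Seq]]] [d [dD dS]]].
have dD' := has_dim_uniq dD (dim_Delta R Hne Htop).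
have [[p0 [ps0 [aff0 sz0]]] ubS] := dS.
have [Dp0 ep0] : DeltaFam Fam p0 /\ dotp a p0 = b by apply/Seq; case: aff0.
have /set0Pn [h _] := Hne _ Htop.
pose A := Amax a.
have [imax _ imaxH] := argmax_ex a (in_setT h).
have imaxA : imax \in A by rewrite inE; apply/forallP => j; apply: imaxH; rewrite inE.
have contra3 : forall B2 b2 b3, compat Fam a B2 -> A :&: B2 == set0 -> b2 \in B2 ->
    b3 \notin A :|: B2 -> False.
  move=> B2 b2 b3 cB dj b2B b3B.
  have cst : forall B, compat Fam a B -> forall x x', S x -> S x' -> sG x B = sG x' B.
    move=> B cB' x x' /Seq [Dx ex] /Seq [Dx' ex'].
    by rewrite (block_const val cB' Dx ex) (block_const val cB' Dx' ex').
  have cT : forall x x', S x -> S x' -> sG x [set: 'I_r] = sG x' [set: 'I_r].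
    by move=> x x' /Seq [Dx _] /Seq [Dx' _]; rewrite (total_sum Dx) (total_sum Dx').
  have := three_blocks (cst _ (@compat_A R r Fam a)) (cst _ cB) cT dj imaxA b2B b3B aff0.
  rewrite sz0; move: dD'; clear; lia.
case: (eqVneq (~: A) set0) => [GA|G0].
  have Aall : forall i, a 0 i = a 0 imax.
    move=> i; have : i \in A by apply/negPn/negP => iA; move/setP: GA => /(_ i);
      rewrite !inE; move: iA; rewrite inE => ->.
    rewrite inE => /forallP /(_ imax) H; apply/eqP; rewrite eq_le H imaxH // inE.
  have dc : forall x, DeltaFam Fam x -> dotp a x = a 0 imax * #|Fam|%:R.
    move=> x Dx; rewrite (dotp_two (G := set0) (m := a 0 imax) (t := a 0 imax) x) ?(total_sum Dx).
    - by rewrite subrr mul0r subr0.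
    - by move=> i; rewrite inE.
    by move=> i _; apply: Aall.
  have [[p [ps [aff sz]]] _] := dD.
  have := ubS p ps (aff_mono (P := DeltaFam Fam) (fun x Dx => proj2 (Seq x) (conj Dx
      (etrans (dc x Dx) (etrans (esym (dc p0 Dp0)) ep0)))) aff).
  rewrite sz; clear; lia.
pose G := ~: A.
have /set0Pn [g gG] := G0.
have [g1 g1G g1H] := argmax_ex a gG.
pose K := [set i in G | [forall j in G, a 0 j <= a 0 i]].
have KG : K \subset G by apply/subsetP => i; rewrite inE => /andP[].
have dAG : forall B : {set 'I_r}, B \subset G -> A :&: B == set0.
  move=> B BG; apply/eqP/setP => i; rewrite in_setI in_set0; apply/negbTE/negP => /andP[iA iB].
  by have := subsetP BG i iB; rewrite in_setC iA.
have g1K : g1 \in K by rewrite inE g1G; apply/forall_inP.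
case: (eqVneq K G) => [KeG | KnG]; last first.
  have [b3 b3G b3K] : exists2 b3, b3 \in G & b3 \notin K.
    apply/subsetPn; apply: contra KnG => GK; by rewrite eqEsubset KG GK.
  apply: False_ind; apply: (contra3 K g1 b3) => //; last first.
    by rewrite inE negb_or b3K andbT; move: b3G; rewrite inE.
  by apply: dAG.
  apply: compat_sub => // F FF FG; case: (boolP [exists k, (k \in F) && (k \in K)]).
    move=> /existsP [k /andP[kF kK]]; apply/orP; left; apply/subsetP => i iM.
    have iF := subsetP (Mx_sub a F) i iM; rewrite inE (subsetP FG i iF) /=.
    apply/forall_inP => j jG; move: kK; rewrite inE => /andP[_ /forall_inP /(_ j jG)] h1.
    apply: le_trans h1 _; move: iM; rewrite inE => /andP[_ /forall_inP]; exact.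
  rewrite negb_exists => /forallP nk; apply/orP; right; apply/eqP/setP => i.
  rewrite [in RHS]inE in_setI; apply/negbTE/negP => /andP[iM iK].
  by move: (nk i); rewrite (subsetP (Mx_sub a F) i iM) iK.
have Ht : forall i, i \in G -> a 0 i = a 0 g1.
  move=> i iG; apply/eqP; rewrite eq_le g1H //=.
  have : i \in K by rewrite KeG.
  by rewrite inE => /andP[_ /forall_inP]; apply.
have Hm : forall i, i \notin G -> a 0 i = a 0 imax.
  move=> i; rewrite in_setC negbK inE => /forallP H.
  by apply/eqP; rewrite eq_le H imaxH // inE.
have tm : a 0 g1 < a 0 imax.
  move: g1G; rewrite in_setC inE negb_forall => /existsP [j]; rewrite -ltNge => h1.
  by apply: lt_le_trans h1 (imaxH j _); rewrite inE.
case: (boolP (SEPb Fam G)) => Sep; last first.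
  move: Sep; rewrite /SEPb negb_forall => /existsP [K'].
  rewrite negb_imply => /andP[/andP[K'0 K'G] /existsPn nF].
  have [b3 b3G b3K] : exists2 b3, b3 \in G & b3 \notin K'.
    by apply/subsetPn; move: K'G; rewrite properE => /andP[].
  have K'sG : K' \subset G by move: K'G; rewrite properE => /andP[].
  have /set0Pn [k kK] := K'0.
  apply: False_ind; apply: (contra3 K' k b3) => //; last first.
    by rewrite inE negb_or b3K andbT; move: b3G; rewrite in_setC.
    by apply: dAG.
  apply: compat_sub => // F FF FG.
  move: (nF F); rewrite FF FG /= negb_and negbK => /orP[/eqP FK0|FK].
    apply/orP; right; apply/eqP/setP => i; rewrite [in RHS]inE in_setI.
    apply/negbTE/negP => /andP[iM iK]; move/setP: FK0 => /(_ i).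
    by rewrite !inE (subsetP (Mx_sub a F) i iM) iK.
  by rewrite (subset_trans (Mx_sub a F) (negPn FK)).
exists G; first exact: sep_closure G0 Sep.
split.
  apply/negP => /eqP GT; have : imax \in G by rewrite GT inE.
  by rewrite in_setC imaxA.
have FE := @face_eq R r Fam a b p0 G _ _ h Hne Ht Hm tm val Dp0 ep0.
move=> x; split.
  by move=> /Seq /FE.
by move=> /FE /Seq.
Qed.

Unset Implicit Arguments.
Set Strict Implicit.

Theorem corollary3p13 (R : realFieldType) (r : nat)
  (Fam : {set {set 'I_r}})
  (Hne : forall F, F \in Fam -> F != set0)
  (Htop : [set: 'I_r] \in Fam) :
  has_dim (DeltaFam (R:=R) Fam) r.-1 /\
  (forall G, G \in bclosure Fam -> G != [set: 'I_r] ->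
     facet (DeltaFam (R:=R) Fam) (Gface (R:=R) Fam G)) /\
  (forall G1 G2, G1 \in bclosure Fam -> G2 \in bclosure Fam ->
     G1 != [set: 'I_r] -> G2 != [set: 'I_r] ->
     seteqP (Gface (R:=R) Fam G1) (Gface (R:=R) Fam G2) -> G1 = G2) /\
  (forall S, facet (DeltaFam (R:=R) Fam) S ->
     exists2 G, G \in bclosure Fam &
       G != [set: 'I_r] /\ seteqP S (Gface (R:=R) Fam G)) /\
  (forall G0, G0 \in bclosure Fam -> G0 != [set: 'I_r] ->
     exists x : 'rV[R]_r,
       Hsys Fam (bclosure Fam :\ G0) x /\ ~ Hsys Fam (bclosure Fam) x).
Proof.
split; first exact: dim_Delta.
split.
  move=> G GB GT; split; first exact: Gface_face.
  have [dG r2] := dim_Gface R Hne Htop GB GT.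
  exists (r - 2)%N; split => //.
  have -> : (r - 2).+1 = r.-1 by move: r2; clear; lia.
  exact: dim_Delta.
split.
  by move=> G1 G2 _ _; apply: part3.
split.
  by move=> S; apply: part4.
by move=> G0; apply: part5.
Qed.
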